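(* The quadratic vector equation $Mx=a+b(x,x)$ has at least one (nonnegative) solution if and only if Condition A1 holds. Moreover, if it has a solution, then it has a minimal solution.
   Context: Inequalities between vectors/matrices are componentwise. An M-matrix is a matrix $sI-P$ with $P\geq0$ entrywise and $s\geq\rho(P)$ ($\rho$ = spectral radius). Let $M\in\mathbb R^{n\times n}$ be a nonsingular M-matrix, $a\in\mathbb R^n$ with $a\geq 0$, and $b:\mathbb R^n\times\mathbb R^n\to\mathbb R^n$ a bilinear map (not necessarily symmetric) with $b(x,y)\geq 0$ whenever $x,y\geq 0$. A solution of the quadratic vector equation $Mx=a+b(x,x)$ means a vector $x\geq 0$ satisfying it; a solution $x_\ast$ is minimal if $x_\ast\leq y$ for every solution $y$. A linear map $l:\mathbb R^n\to\mathbb R^m$ is weakly positive if $l(x)\geq 0$ and $l(x)\neq 0$ whenever $x\geq 0$, $x\neq 0$. Condition A1: there exist a weakly positive linear map $l:\mathbb R^n\to\mathbb R^m$ (for some $m$) and a vector $z\in\mathbb R^m$, $z\geq 0$, such that for every $x\geq 0$, $l(x)\leq z$ implies $l\big(M^{-1}(a+b(x,x))\big)\leq z$. *)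

(* Defs.v *)
From HB Require Import structures.
From mathcomp Require Import all_boot.
From Stdlib Require Import Reals.
Set Implicit Arguments. Unset Strict Implicit. Unset Printing Implicit Defensive.

Open Scope R_scope.

Lemma Rplus_0_r' : right_id 0 Rplus. Proof. intro x; apply Rplus_0_r. Qed.
Lemma Rplus_0_l' : left_id 0 Rplus. Proof. intro x; apply Rplus_0_l. Qed.
Lemma Rplus_assoc' : associative Rplus. Proof. intros x y z; symmetry; apply Rplus_assoc. Qed.
HB.instance Definition _ := Monoid.isComLaw.Build R 0 Rplus Rplus_assoc' Rplus_comm Rplus_0_l'.

Definition vec (n : nat) := 'I_n -> R.
Definition mat (n m : nat) := 'I_n -> 'I_m -> R.

Definition mulv (n m : nat) (A : mat n m) (x : vec m) : vec n :=
  fun i => \big[Rplus/0]_(j < m) (A i j * x j).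

Definition vle (n : nat) (x y : vec n) : Prop := forall i, x i <= y i.
Definition vnonneg (n : nat) (x : vec n) : Prop := forall i, 0 <= x i.
Definition mnonneg (n m : nat) (A : mat n m) : Prop := forall i j, 0 <= A i j.
Definition vnonzero (n : nat) (x : vec n) : Prop := exists i, x i <> 0.

Definition idm (n : nat) : mat n n := fun i j => if i == j then 1 else 0.

Definition is_linear (n m : nat) (f : vec n -> vec m) : Prop :=
  (forall x y i, f (fun k => x k + y k) i = f x i + f y i) /\
  (forall c x i, f (fun k => c * x k) i = c * f x i).

Definition is_bilinear (n : nat) (b : vec n -> vec n -> vec n) : Prop :=
  (forall y, is_linear (fun x => b x y)) /\ (forall x, is_linear (fun y => b x y)).

(* (alpha + i beta) is a complex eigenvalue of the real matrix P, with a
   complex eigenvector u + i v (nonzero): P(u + iv) = (alpha + i beta)(u + iv). *)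
Definition complex_eigenvalue (n : nat) (P : mat n n) (alpha beta : R) : Prop :=
  exists u v : vec n, (vnonzero u \/ vnonzero v) /\
    (forall i, mulv P u i = alpha * u i - beta * v i) /\
    (forall i, mulv P v i = beta * u i + alpha * v i).

(* s >= rho(P): s bounds the modulus of every (complex) eigenvalue of P *)
Definition spectral_radius_le (n : nat) (P : mat n n) (s : R) : Prop :=
  forall alpha beta, complex_eigenvalue P alpha beta ->
    sqrt (alpha ^ 2 + beta ^ 2) <= s.

Definition is_Mmatrix (n : nat) (M : mat n n) : Prop :=
  exists (s : R) (P : mat n n), mnonneg P /\ spectral_radius_le P s /\
    (forall i j, M i j = s * @idm n i j - P i j).

Definition is_inverse (n : nat) (M N : mat n n) : Prop :=
  (forall i j, \big[Rplus/0]_(k < n) (M i k * N k j) = @idm n i j) /\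
  (forall i j, \big[Rplus/0]_(k < n) (N i k * M k j) = @idm n i j).

Definition is_solution (n : nat) (M : mat n n) (a : vec n)
    (b : vec n -> vec n -> vec n) (x : vec n) : Prop :=
  vnonneg x /\ forall i, mulv M x i = a i + b x x i.

Definition is_minimal_solution (n : nat) (M : mat n n) (a : vec n)
    (b : vec n -> vec n -> vec n) (x : vec n) : Prop :=
  is_solution M a b x /\ forall y, is_solution M a b y -> vle x y.

Definition weakly_positive (n m : nat) (l : vec n -> vec m) : Prop :=
  is_linear l /\ forall x, vnonneg x -> vnonzero x -> vnonneg (l x) /\ vnonzero (l x).

Definition conditionA1 (n : nat) (Minv : mat n n) (a : vec n)
    (b : vec n -> vec n -> vec n) : Prop :=
  exists (m : nat) (l : vec n -> vec m) (z : vec m),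
    weakly_positive l /\ vnonneg z /\
    forall x : vec n, vnonneg x -> vle (l x) z ->
      vle (l (mulv Minv (fun i => a i + b x x i))) z.

(* Main.v *)
From HB Require Import structures.
From mathcomp Require Import all_boot all_algebra.
From Stdlib Require Import Reals Lra ClassicalEpsilon FunctionalExtensionality.
Require Import Defs.

Definition Req_bool (x y : R) : bool := if Req_EM_T x y then true else false.
Lemma Req_boolP : Equality.axiom Req_bool.
Proof. move=> x y; rewrite /Req_bool; case: Req_EM_T => h; [by constructor|by constructor]. Qed.
HB.instance Definition _ := hasDecEq.Build R Req_boolP.

Definition Rfind (P : pred R) (k : nat) : option R :=
  match excluded_middle_informative (exists x, P x) with
  | left h => Some (proj1_sig (constructive_indefinite_description _ h))
  | right _ => None end.
Lemma Rfind_correct P k x : Rfind P k = Some x -> P x.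
Proof. rewrite /Rfind; case: excluded_middle_informative => // h [<-].
by case: constructive_indefinite_description. Qed.
Lemma Rfind_complete (P : pred R) : (exists x, P x) -> exists k, Rfind P k.
Proof. move=> h; exists O; rewrite /Rfind; case: excluded_middle_informative => //. Qed.
Lemma Rfind_ext (P Q : pred R) : P =1 Q -> Rfind P =1 Rfind Q.
Proof. move=> h; have -> : P = Q by apply: functional_extensionality. by []. Qed.
HB.instance Definition _ := hasChoice.Build R Rfind_correct Rfind_complete Rfind_ext.

Lemma RaddA : associative Rplus. Proof. move=> x y z; rewrite Rplus_assoc //. Qed.
Lemma RaddC : commutative Rplus. Proof. move=> x y; apply Rplus_comm. Qed.
Lemma Radd0 : left_id R0 Rplus. Proof. move=> x; apply Rplus_0_l. Qed.
Lemma RaddN : left_inverse R0 Ropp Rplus. Proof. move=> x; apply Rplus_opp_l. Qed.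
HB.instance Definition _ := GRing.isZmodule.Build R RaddA RaddC Radd0 RaddN.
Lemma RmulA : associative Rmult. Proof. move=> x y z; rewrite Rmult_assoc //. Qed.
Lemma RmulC : commutative Rmult. Proof. move=> x y; apply Rmult_comm. Qed.
Lemma Rmul1 : left_id R1 Rmult. Proof. move=> x; apply Rmult_1_l. Qed.
Lemma RmulDl : left_distributive Rmult Rplus. Proof. move=> x y z; apply Rmult_plus_distr_r. Qed.
Lemma Rone0 : R1 != R0. Proof. apply/eqP; apply R1_neq_R0. Qed.
HB.instance Definition _ := GRing.Zmodule_isComNzRing.Build R RmulA RmulC Rmul1 RmulDl Rone0.
Definition Rinv' (x : R) := if Req_EM_T x 0 then 0 else Rinv x.
Lemma RmulVf (x : R) : x != R0 -> Rmult (Rinv' x) x = R1.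
Proof. move=> hx; have h : x <> R0 by apply/eqP. rewrite /Rinv'; case: Req_EM_T => [e|e]; [by exfalso; apply: h | by apply Rinv_l]. Qed.
Lemma Rinv0 : Rinv' R0 = R0.
Proof. rewrite /Rinv'; case: Req_EM_T => [e|e]; [by [] | by exfalso; apply: e]. Qed.
HB.instance Definition _ := GRing.ComNzRing_isField.Build R RmulVf Rinv0.


Section IS.
Local Open Scope ring_scope.
Lemma inj_surj n (A : mat n n) :
 (forall x : vec n, (forall i, mulv A x i = R0) -> forall i, x i = R0) ->
 forall y : vec n, exists x : vec n, forall i, mulv A x i = y i.
Proof.
move=> hinj y.
pose B : 'M[R]_n := \matrix_(i, j) A j i.
have key : forall (u : 'rV[R]_n) j, (u *m B) ord0 j = mulv A (fun i => u ord0 i) j.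
  move=> u j; rewrite mxE /mulv; apply: eq_bigr => i _; rewrite mxE; apply: RmulC.
have hfree : row_free B.
  rewrite -kermx_eq0; apply/eqP/matrixP => k j.
  have hu : row k (kermx B) *m B = 0 by rewrite -row_mul mulmx_ker row0.
  have := hinj (fun i => (row k (kermx B)) ord0 i) _ j.
  rewrite !mxE => -> //.
  move=> i; rewrite -key hu mxE //.
have hunit : B \in unitmx by rewrite -row_free_unit.
pose yr : 'rV[R]_n := \row_j y j.
exists (fun i => (yr *m invmx B) ord0 i).
move=> j; rewrite -key mulmxKV // mxE //.
Qed.
End IS.
Arguments inj_surj {n A}.

Open Scope R_scope.

Section Sums.
Lemma sum_nonneg n (F : 'I_n -> R) : (forall j, 0 <= F j) -> 0 <= \big[Rplus/0]_(j < n) F j.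
Proof. move=> h; apply: (big_ind (fun x => 0 <= x)) => //; [lra | move=> x y; lra]. Qed.

Lemma sum_le n (F G : 'I_n -> R) : (forall j, F j <= G j) ->
  \big[Rplus/0]_(j < n) F j <= \big[Rplus/0]_(j < n) G j.
Proof. move=> h; apply: (big_ind2 (fun x y => x <= y)) => //; [lra | move=> x1 x2 y1 y2; lra]. Qed.

Lemma sum_scal n c (F : 'I_n -> R) :
  \big[Rplus/0]_(j < n) (c * F j) = c * \big[Rplus/0]_(j < n) F j.
Proof. apply: (big_rec2 (fun y1 y2 => y1 = c * y2)); [ring | move=> i y1 y2 _ ->; ring]. Qed.

Lemma sum_add n (F G : 'I_n -> R) :
  \big[Rplus/0]_(j < n) (F j + G j) = \big[Rplus/0]_(j < n) F j + \big[Rplus/0]_(j < n) G j.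
Proof. by rewrite big_split. Qed.

Lemma sum_abs n (F : 'I_n -> R) :
  Rabs (\big[Rplus/0]_(j < n) F j) <= \big[Rplus/0]_(j < n) Rabs (F j).
Proof. apply: (big_ind2 (fun x y => Rabs x <= y)).
- rewrite Rabs_R0; lra.
- move=> x1 x2 y1 y2 h1 h2; have := Rabs_triang x1 y1; lra.
- move=> i _; lra. Qed.

Lemma sum_term n (F : 'I_n -> R) i : (forall j, 0 <= F j) -> F i <= \big[Rplus/0]_(j < n) F j.
Proof. move=> h; rewrite (bigD1 i) //=.
rewrite -{1}(Rplus_0_r (F i)); apply: Rplus_le_compat_l.
apply: (big_ind (fun x => 0 <= x)); [lra | move=> x y; lra | move=> j _; apply h]. Qed.

Lemma sum_idm n i (x : vec n) : \big[Rplus/0]_(j < n) (@idm n i j * x j) = x i.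
Proof. rewrite (bigD1 i) //= big1 /idm ?eqxx.
- ring.
- move=> j hj; rewrite eq_sym (negbTE hj); ring. Qed.

Lemma sum_ext n (F G : 'I_n -> R) : (forall j, F j = G j) ->
  \big[Rplus/0]_(j < n) F j = \big[Rplus/0]_(j < n) G j.
Proof. by move=> h; apply: eq_bigr => j _. Qed.
End Sums.

Section Mulv.
Variables (n m : nat).
Implicit Types (A : mat n m) (x y : vec m).

Lemma mulv_ext A x y i : (forall j, x j = y j) -> mulv A x i = mulv A y i.
Proof. move=> h; apply: sum_ext => j; rewrite h //. Qed.

Lemma mulv_add A x y i : mulv A (fun k => x k + y k) i = mulv A x i + mulv A y i.
Proof. rewrite /mulv -sum_add; apply: sum_ext => j; ring. Qed.

Lemma mulv_scal A c x i : mulv A (fun k => c * x k) i = c * mulv A x i.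
Proof. rewrite /mulv -sum_scal; apply: sum_ext => j; ring. Qed.

Lemma mulv_sub A x y i : mulv A (fun k => x k - y k) i = mulv A x i - mulv A y i.
Proof. rewrite /mulv.
have -> : mulv A x i - mulv A y i = mulv A x i + (-1) * mulv A y i by ring.
rewrite /mulv -sum_scal -sum_add; apply: sum_ext => j; ring. Qed.

Lemma mulv_nonneg A x : mnonneg A -> vnonneg x -> vnonneg (mulv A x).
Proof. move=> hA hx i; apply: sum_nonneg => j; apply: Rmult_le_pos; [apply hA|apply hx]. Qed.

Lemma mulv_mono A x y : mnonneg A -> vle x y -> vle (mulv A x) (mulv A y).
Proof. move=> hA hxy i; apply: sum_le => j; apply: Rmult_le_compat_l; [apply hA|apply hxy]. Qed.
End Mulv.

Lemma mulv_comp n (A B : mat n n) :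
  (forall i j, \big[Rplus/0]_(k < n) (A i k * B k j) = @idm n i j) ->
  forall x i, mulv A (mulv B x) i = x i.
Proof.
move=> h x i; rewrite /mulv.
rewrite (@sum_ext _ _ (fun k => \big[Rplus/0]_(j < n) (A i k * (B k j * x j)))); last first.
  by move=> k; rewrite -sum_scal.
rewrite exchange_big /=.
rewrite -(@sum_idm n i x); apply: sum_ext => j.
rewrite -h Rmult_comm -sum_scal; apply: sum_ext => k; ring.
Qed.
Arguments mulv_comp {n A B}.

Lemma argmax_seq (T : eqType) (f : T -> R) (s : seq T) (x0 : T) :
  exists k, f x0 <= f k /\ forall i, i \in s -> f i <= f k.
Proof.
elim: s => [|a s [k [h0 hs]]].
- exists x0; split; [lra | by []].
- case: (Rle_dec (f a) (f k)) => hak.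
  + exists k; split => // i; rewrite in_cons => /orP [/eqP -> //|]; exact: hs.
  + exists a; split; first lra.
    move=> i; rewrite in_cons => /orP [/eqP -> |hi]; first lra.
    have := hs i hi; lra.
Qed.

Lemma argmax n (f : 'I_n -> R) (i0 : 'I_n) : exists k, forall i, f i <= f k.
Proof.
have [k [_ hk]] := @argmax_seq _ f (enum 'I_n) i0.
exists k => i; apply: hk; by rewrite mem_enum.
Qed.

Definition Mt {n} (P : mat n n) (t : R) : mat n n := fun i j => t * @idm n i j - P i j.

Lemma mulv_Mt n (P : mat n n) t x i : mulv (Mt P t) x i = t * x i - mulv P x i.
Proof.
rewrite /mulv /Mt.
rewrite (@sum_ext _ _ (fun j => t * (@idm n i j * x j) + (-1) * (P i j * x j))); last first.
  move=> j; ring.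
rewrite sum_add !sum_scal (@sum_idm n i x); ring.
Qed.

Lemma SP n (P : mat n n) t (w : vec n) : mnonneg P -> (forall i, 0 < w i) ->
  (forall i, 0 < t * w i - mulv P w i) ->
  forall x : vec n, (forall i, 0 <= t * x i - mulv P x i) -> vnonneg x.
Proof.
move=> hP hw hMw x hx i0; apply: Rnot_lt_le => hneg.
have [k hk] := @argmax _ (fun i => - x i / w i) i0.
set c := - x k / w k.
have hwk := hw k.
have hc : 0 < c.
  have := hk i0; rewrite /= -/c => h.
  have : 0 < - x i0 / w i0 by apply: Rdiv_lt_0_compat; [lra | apply hw].
  lra.
set z := fun i => x i + c * w i.
have hz : vnonneg z.
  move=> i; rewrite /z.
  have hi := hk i; rewrite /= -/c in hi.
  have hwi := hw i.
  have e : - x i = (- x i / w i) * w i by field; lra.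
  have : (- x i / w i) * w i <= c * w i by apply: Rmult_le_compat_r; lra.
  lra.
have hzk : z k = 0 by rewrite /z /c; field; lra.
have hPz : mulv P z k = mulv P x k + c * mulv P w k by rewrite /z mulv_add mulv_scal.
have hPz0 : 0 <= mulv P z k by apply: mulv_nonneg.
have h1 := hx k.
have h2 := hMw k.
have h3 : 0 < c * (t * w k - mulv P w k) by apply: Rmult_lt_0_compat.
have e : t * x k - mulv P x k + c * (t * w k - mulv P w k) = t * z k - mulv P z k.
  rewrite hPz /z; ring.
rewrite hzk in e.
lra.
Qed.

Lemma inj_Mt n (P : mat n n) s (Minv : mat n n) (hspec : spectral_radius_le P s)
  (hL : forall i j, \big[Rplus/0]_(k < n) (Minv i k * Mt P s k j) = @idm n i j)
  t (ht : s <= t) : forall x : vec n, (forall i, mulv (Mt P t) x i = 0) -> forall i, x i = 0.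
Proof.
move=> x hx; case: (Rle_lt_or_eq_dec s t ht) => [hlt|e]; last subst t.
- move=> i; apply: NNPP => hi.
  have ev : complex_eigenvalue P t 0.
    exists x, (fun _ => 0); split; first by left; exists i.
    split.
    + move=> j; have := hx j; rewrite mulv_Mt /=; lra.
    + move=> j; rewrite (@mulv_ext _ _ P _ (fun k => 0 * x k)); last by move=> k /=; ring.
      rewrite mulv_scal /=; ring.
  have := hspec _ _ ev.
  have -> : t ^ 2 + 0 ^ 2 = Rsqr t by rewrite /Rsqr; ring.
  rewrite sqrt_Rsqr_abs; have := Rle_abs t; lra.
- move=> i; rewrite -(mulv_comp hL x i).
  rewrite (@mulv_ext _ _ Minv _ (fun k => 0 * x k)); last by move=> k /=; rewrite hx; ring.
  rewrite mulv_scal; ring.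
Qed.

Lemma Inv_of_inj n (A : mat n n) :
  (forall x : vec n, (forall i, mulv A x i = 0) -> forall i, x i = 0) ->
  exists N : mat n n, (forall y i, mulv A (mulv N y) i = y i) /\
                      (forall x i, mulv N (mulv A x) i = x i).
Proof.
move=> hinj; have hs := inj_surj hinj.
pose N : mat n n := fun k j =>
  proj1_sig (constructive_indefinite_description _ (hs (fun i => @idm n i j))) k.
have hN : forall i j, \big[Rplus/0]_(k < n) (A i k * N k j) = @idm n i j.
  move=> i j; rewrite /N; case: constructive_indefinite_description => c hc /=; exact: hc i.
exists N; split; first exact: mulv_comp hN.
move=> x i.
have h := hinj (fun j => mulv N (mulv A x) j - x j).
suff : mulv N (mulv A x) i - x i = 0 by lra.
apply: h => k; rewrite mulv_sub (mulv_comp hN); ring.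
Qed.

Lemma mulv_bound n (N : mat n n) (y : vec n) Y : 0 <= Y -> (forall j, Rabs (y j) <= Y) ->
  forall i, Rabs (mulv N y i) <= (1 + \big[Rplus/0]_(i < n) \big[Rplus/0]_(j < n) Rabs (N i j)) * Y.
Proof.
move=> hY hy i.
apply: Rle_trans; first exact: sum_abs.
apply: Rle_trans.
  apply: (@sum_le _ _ (fun j => Y * Rabs (N i j))) => j.
  rewrite Rabs_mult Rmult_comm; apply: Rmult_le_compat_r; [apply Rabs_pos | apply hy].
rewrite sum_scal Rmult_comm; apply: Rmult_le_compat_r => //.
have := @sum_term _ (fun i => \big[Rplus/0]_(j < n) Rabs (N i j)) i.
have : 0 <= 1 by lra.
move=> h1 h2; have := h2 (fun k => @sum_nonneg _ _ (fun j => Rabs_pos _)); lra.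
Qed.

Lemma Mt_inv_pos n (P : mat n n) s (Minv : mat n n) (hP : mnonneg P)
  (hspec : spectral_radius_le P s)
  (hL : forall i j, \big[Rplus/0]_(k < n) (Minv i k * Mt P s k j) = @idm n i j) :
  forall x : vec n, (forall i, 0 <= s * x i - mulv P x i) -> vnonneg x.
Proof.
pose Q := fun t => forall x : vec n, (forall i, 0 <= t * x i - mulv P x i) -> vnonneg x.
suff : Q s by [].
have hInv : forall t, s <= t -> exists N : mat n n,
    (forall y i, mulv (Mt P t) (mulv N y) i = y i) /\
    (forall x i, mulv N (mulv (Mt P t) x) i = x i).
  move=> t ht; apply: Inv_of_inj; exact: inj_Mt hspec hL t ht.
pose S := \big[Rplus/0]_(i < n) \big[Rplus/0]_(j < n) P i j.
have hS : 0 <= S by apply: sum_nonneg => i; apply: sum_nonneg => j; apply hP.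
pose Tb := Rabs s + S + 1.
have hsTb : s <= Tb by have := Rle_abs s; rewrite /Tb; lra.
have hTb : forall t, Tb <= t -> Q t.
  move=> t ht; apply: (@SP n P t (fun _ => 1)) => //.
  - move=> i; lra.
  - move=> i.
    have : mulv P (fun _ => 1) i <= S.
      rewrite /mulv (@sum_ext _ _ (fun j => P i j)); last by move=> j; ring.
      exact: (@sum_term _ (fun i => \big[Rplus/0]_(j < n) P i j) i (fun k => @sum_nonneg _ _ (fun j => hP k j))).
    have := Rabs_pos s; rewrite /Tb in ht; lra.
pose A := fun u => s <= u /\ forall t, u <= t -> Q t.
pose E := fun u => A (- u).
have hEb : bound E by exists (- s) => u [hu _]; lra.
have hEn : exists u, E u.
  exists (- Tb); rewrite /E /A Ropp_involutive; split => // t ht; exact: hTb.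
have [m [hm1 hm2]] := completeness E hEb hEn.
pose ts := - m.
have hts : s <= ts.
  have : m <= - s by apply: hm2 => u [hu _]; lra.
  rewrite /ts; lra.
have hlow : forall t, A t -> ts <= t.
  move=> t hA; have : - t <= m by apply: hm1; rewrite /E Ropp_involutive.
  rewrite /ts; lra.
have happ : forall eps, 0 < eps -> exists t, A t /\ t < ts + eps.
  move=> eps he; apply: NNPP => hno.
  have : m <= m - eps.
    apply: hm2 => u hu; apply: Rnot_lt_le => hlt; apply: hno.
    exists (- u); split => //; rewrite /ts; lra.
  lra.
have [N0 [hN0r hN0l]] := hInv ts hts.
pose C := 1 + \big[Rplus/0]_(i < n) \big[Rplus/0]_(j < n) Rabs (N0 i j).
have hC : 0 < C.
  have : 0 <= \big[Rplus/0]_(i < n) \big[Rplus/0]_(j < n) Rabs (N0 i j).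
    apply: sum_nonneg => i; apply: sum_nonneg => j; apply Rabs_pos.
  rewrite /C; lra.
have he4 : 0 < 1 / (4 * C) by apply: Rdiv_lt_0_compat; lra.
have [t [[hst hQt] htlt]] := happ _ he4.
have htge : ts <= t by apply: hlow.
have [N1 [hN1r _]] := hInv t hst.
pose w := mulv N1 (fun _ => 1).
have hMw : forall i, t * w i - mulv P w i = 1 by move=> i; rewrite -mulv_Mt hN1r.
have hw0 : vnonneg w by apply: (hQt t (Rle_refl t)) => i; rewrite hMw; lra.
have hwpos : forall i, 0 < w i.
  move=> i; have h1 := hMw i; have h2 : 0 <= mulv P w i by apply: mulv_nonneg.
  case: (Rle_lt_or_eq_dec 0 (w i) (hw0 i)) => // e.
  rewrite -e in h1; lra.
have hCt : C * (t - ts) <= 1 / 4.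
  have : C * (t - ts) < C * (1 / (4 * C)) by apply: Rmult_lt_compat_l; lra.
  have -> : C * (1 / (4 * C)) = 1 / 4 by field; lra.
  lra.
have hwb : forall i, w i <= 2 * C.
  move=> i; have [k hk] := @argmax _ (fun i => Rabs (w i)) i.
  pose W := Rabs (w k).
  have hW : 0 <= W by apply: Rabs_pos.
  have hy : forall j, mulv (Mt P ts) w j = 1 - (t - ts) * w j.
    move=> j; rewrite mulv_Mt.
    transitivity (t * w j - mulv P w j - (t - ts) * w j); first ring.
    rewrite hMw; ring.
  have hwk : w k = mulv N0 (fun j => 1 - (t - ts) * w j) k.
    rewrite -{1}(hN0l w k); apply: mulv_ext; exact: hy.
  have hbnd := @mulv_bound n N0 (fun j => 1 - (t - ts) * w j) (1 + (t - ts) * W).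
  have hY : 0 <= 1 + (t - ts) * W.
    have : 0 <= (t - ts) * W by apply: Rmult_le_pos; lra.
    lra.
  have hyb : forall j, Rabs (1 - (t - ts) * w j) <= 1 + (t - ts) * W.
    move=> j; have := Rabs_triang 1 (- ((t - ts) * w j)).
    rewrite Rabs_Ropp Rabs_mult (Rabs_pos_eq (t - ts)); last lra.
    rewrite Rabs_R1.
    have : (t - ts) * Rabs (w j) <= (t - ts) * W.
      apply: Rmult_le_compat_l; [lra | exact: hk].
    rewrite /Rminus; lra.
  have h1 := hbnd hY hyb k.
  rewrite -hwk -/W -/C in h1.
  have h2 : C * ((t - ts) * W) <= 1 / 4 * W.
    rewrite -Rmult_assoc; apply: Rmult_le_compat_r; lra.
  have h3 : C * (1 + (t - ts) * W) = C + C * ((t - ts) * W) by ring.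
  have h4 := hk i; have h5 := Rle_abs (w i).
  rewrite /= -/W in h4.
  lra.
pose d' := 1 / (8 * C).
have hd' : 0 < d' by apply: Rdiv_lt_0_compat; lra.
have hQmid : forall t', ts - d' <= t' -> t' <= t -> Q t'.
  move=> t' h1 h2; apply: (@SP n P t' w) => // i.
  have e : t' * w i - mulv P w i = 1 - (t - t') * w i.
    transitivity (t * w i - mulv P w i - (t - t') * w i); first ring.
    rewrite hMw; ring.
  rewrite e.
  have h3 : t - t' <= 3 / (8 * C).
    have : 1 / (4 * C) + d' = 3 / (8 * C) by rewrite /d'; field; lra.
    lra.
  have : (t - t') * w i <= 3 / (8 * C) * (2 * C).
    apply: Rmult_le_compat; [lra | exact: Rlt_le (hwpos i) | exact h3 | exact: hwb].
  have -> : 3 / (8 * C) * (2 * C) = 3 / 4 by field; lra.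
  lra.
case: (Rle_lt_dec (ts - d') s) => hcase.
- apply: hQmid => //; lra.
- exfalso.
  have hA : A (ts - d').
    split; first lra.
    move=> t'' h; case: (Rle_lt_dec t'' t) => h'.
    + apply: hQmid => //; lra.
    + apply: hQt; lra.
  have := hlow _ hA; lra.
Qed.

Section Lin.
Variables (n m : nat) (f : vec n -> vec m) (hf : is_linear f).

Lemma lin_split (x u : vec n) i : f x i = f (fun k => x k - u k) i + f u i.
Proof.
rewrite -(proj1 hf); congr (f _ i); apply: functional_extensionality => k; ring.
Qed.

Lemma lin_zero i : f (fun _ => 0) i = 0.
Proof.
have := (proj2 hf) 0 (fun _ => 0) i.
have -> : (fun k : 'I_n => 0 * (fun _ : 'I_n => 0) k) = (fun _ => 0).
  by apply: functional_extensionality => k; ring.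
move=> ->; ring.
Qed.

Lemma lin_nonneg : (forall x, vnonneg x -> vnonzero x -> vnonneg (f x)) ->
  forall x, vnonneg x -> vnonneg (f x).
Proof.
move=> hpos x hx; case: (classic (vnonzero x)) => hnz; first exact: hpos.
have -> : x = (fun _ => 0).
  apply: functional_extensionality => k; apply: NNPP => hk; apply: hnz; by exists k.
move=> i; rewrite lin_zero; lra.
Qed.
End Lin.
Arguments lin_split {n m f}.
Arguments lin_zero {n m f}.
Arguments lin_nonneg {n m f}.

Lemma cv_le (u : nat -> R) l c : Un_cv u l -> (forall k, u k <= c) -> l <= c.
Proof.
move=> hcv hu; apply: Rnot_lt_le => hlt.
have [N hN] := hcv (l - c) ltac:(lra).
have := hN N (le_n N); have := hu N.
rewrite /Rdist => h1 h2.
have := Rle_abs (- (u N - l)); rewrite Rabs_Ropp; lra.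
Qed.

Theorem mainTheorem4 (n : nat) (M Minv : mat n n) (a : vec n)
    (b : vec n -> vec n -> vec n)
    (hM : is_Mmatrix M) (hMinv : is_inverse M Minv)
    (ha : vnonneg a) (hb : is_bilinear b)
    (hbpos : forall x y, vnonneg x -> vnonneg y -> vnonneg (b x y)) :
  ((exists x, is_solution M a b x) <-> conditionA1 Minv a b) /\
  ((exists x, is_solution M a b x) -> exists x, is_minimal_solution M a b x).
Proof.
have [s [P [hP [hspec hMeq]]]] := hM.
have [hR hL0] := hMinv.
have hL : forall i j, \big[Rplus/0]_(k < n) (Minv i k * Mt P s k j) = @idm n i j.
  move=> i j; rewrite -hL0; apply: sum_ext => k; rewrite hMeq /Mt //.
have hMinvpos : mnonneg Minv.
  move=> i j.
  apply: (@Mt_inv_pos n P s Minv hP hspec hL (fun k => Minv k j)) => i'.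
  rewrite -mulv_Mt /mulv.
  rewrite (@sum_ext _ _ (fun k => M i' k * Minv k j)); last by move=> k; rewrite hMeq /Mt.
  rewrite hR /idm; case: eqP => _; lra.
have [hb1 hb2] := hb.
have b_mono : forall x x' y y', vnonneg x -> vle x x' -> vnonneg y -> vle y y' ->
    vle (b x y) (b x' y').
  move=> x x' y y' hx hxx hy hyy i.
  rewrite (lin_split (hb1 y') x' x i) (lin_split (hb2 x) y' y i).
  have h1 : 0 <= b (fun k => x' k - x k) y' i.
    apply: hbpos => k; [have := hxx k; lra | have := hy k; have := hyy k; lra].
  have h2 : 0 <= b x (fun k => y' k - y k) i.
    apply: hbpos => k; [exact: hx | have := hyy k; lra].
  lra.
pose G := fun x : vec n => mulv Minv (fun i => a i + b x x i).
have G_nonneg : forall x, vnonneg x -> vnonneg (G x).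
  move=> x hx; apply: mulv_nonneg => // i.
  have := ha i; have := hbpos x x hx hx i; lra.
have G_mono : forall x y, vnonneg x -> vle x y -> vle (G x) (G y).
  move=> x y hx hxy; apply: mulv_mono => // i.
  have hy : vnonneg y by move=> k; have := hx k; have := hxy k; lra.
  have := b_mono x y x y hx hxy hx hxy i; lra.
have hsolG : forall x, is_solution M a b x <-> vnonneg x /\ forall i, G x i = x i.
  move=> x; split.
  - move=> [hx hxe]; split => // i.
    rewrite -(mulv_comp hL0 x i) /G; apply: mulv_ext => j; by rewrite hxe.
  - move=> [hx hG]; split => // i.
    rewrite -(mulv_comp hR (fun j => a j + b x x j) i).
    apply: mulv_ext => j; by rewrite -hG.
have Hsol : (exists x, is_solution M a b x) -> conditionA1 Minv a b.
  move=> [xs hxs]; have [hxs0 hxsG] := proj1 (hsolG xs) hxs.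
  exists n, (fun x => x), xs; split; last split => //.
  - split; first by split.
    by move=> x hx hnz.
  - move=> x hx hxle i /=.
    rewrite -(hxsG i); exact: G_mono.
have HA1 : conditionA1 Minv a b -> exists x, is_minimal_solution M a b x.
  move=> [m [l [z [[hlin hlpos] [hz hA]]]]].
  pose it := nat_rect (fun _ => vec n) (fun _ => 0) (fun _ v => G v).
  have it0 : it 0%nat = (fun _ => 0) by [].
  have itS : forall k, it (S k) = G (it k) by [].
  have hit0 : forall k, vnonneg (it k).
    elim=> [|k IH]; first by rewrite it0 => i; lra.
    rewrite itS; exact: G_nonneg.
  have hgrow : forall k, vle (it k) (it (S k)).
    elim=> [|k IH].
    + rewrite itS it0; move=> i; apply: (G_nonneg (fun _ => 0)) => j; lra.
    + rewrite (itS (S k)) (itS k); exact: G_mono.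
  have hitl : forall k, vle (l (it k)) z.
    elim=> [|k IH].
    + rewrite it0 => j; rewrite (lin_zero hlin j); exact: hz.
    + rewrite itS; exact: hA.
  have hbound : forall i, exists B, forall k, it k i <= B.
    move=> i.
    pose e := fun k : 'I_n => if k == i then 1 else 0.
    have he : vnonneg e by move=> k; rewrite /e; case: eqP => _; lra.
    have hnz : vnonzero e by exists i; rewrite /e eqxx; lra.
    have [hle [j hj]] := hlpos e he hnz.
    have hc : 0 < l e j by have := hle j; lra.
    exists (z j / l e j) => k.
    have hx := hit0 k.
    have key : it k i * l e j <= l (it k) j.
      rewrite (lin_split hlin (it k) (fun k0 => it k i * e k0) j) (proj2 hlin).
      have : 0 <= l (fun k0 => it k k0 - it k i * e k0) j.
        apply: (lin_nonneg hlin (fun x h1 h2 => proj1 (hlpos x h1 h2))) => k0.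
        rewrite /e; case: eqP => [->|_]; have := hx k0; lra.
      lra.
    have := hitl k j.
    move=> h; apply: (Rmult_le_reg_r (l e j)) => //.
    rewrite /Rdiv Rmult_assoc Rinv_l; lra.
  have hub : forall i, has_ub (fun k => it k i).
    move=> i; have [B hB] := hbound i; exists B => x [k ->]; exact: hB.
  pose xs := fun i => proj1_sig (growing_cv (fun k => it k i) (fun k => hgrow k i) (hub i)).
  have hcv : forall i, Un_cv (fun k => it k i) (xs i).
    move=> i; rewrite /xs; by case: growing_cv.
  have hle : forall k i, it k i <= xs i.
    move=> k i; exact: (growing_ineq _ _ (fun k => hgrow k i) (hcv i)).
  have hxs0 : vnonneg xs by move=> i; have := hle 0%nat i; rewrite it0.
  have hG1 : forall i, xs i <= G xs i.
    move=> i; apply: (@cv_le _ _ _ (hcv i)) => -[|k].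
    + rewrite it0; exact: G_nonneg.
    + rewrite itS; apply: G_mono => //; exact: hle.
  pose V := mulv Minv (fun j => b (fun _ => 1) xs j + b xs (fun _ => 1) j).
  have one0 : vnonneg (fun _ : 'I_n => 1) by move=> k; lra.
  have hkey : forall (u : vec n) eps, vnonneg u -> vle u xs -> 0 <= eps ->
      (forall j, xs j - u j <= eps) -> forall i, G xs i - G u i <= eps * V i.
    move=> u eps hu hux heps hd i.
    rewrite /G -mulv_sub /V -mulv_scal; apply: mulv_mono => // j.
    have hdn : vnonneg (fun k => xs k - u k) by move=> k; have := hux k; lra.
    have hde : vle (fun k => xs k - u k) (fun k => eps * (fun _ => 1) k).
      by move=> k /=; have := hd k; lra.
    rewrite (lin_split (hb1 xs) xs u j) (lin_split (hb2 u) xs u j).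
    have h1 := b_mono _ _ _ _ hdn hde hxs0 (fun k => Rle_refl (xs k)) j.
    have h2 := b_mono _ _ _ _ hu hux hdn hde j.
    rewrite (proj2 (hb1 xs)) in h1; rewrite (proj2 (hb2 xs)) in h2.
    lra.
  have hV : vnonneg V.
    apply: mulv_nonneg => // j.
    have := hbpos _ _ one0 hxs0 j; have := hbpos _ _ hxs0 one0 j; lra.
  have hG2 : forall i, G xs i <= xs i.
    move=> i; apply: Rle_plus_epsilon => del hdel.
    have hVi := hV i.
    pose eps := del / (V i + 1).
    have heps : 0 < eps by apply: Rdiv_lt_0_compat; lra.
    have hN : forall j, exists N, forall k, (k >= N)%coq_nat -> Rdist (it k j) (xs j) < eps.
      move=> j; exact: hcv j eps heps.
    pose f := fun j => proj1_sig (constructive_indefinite_description _ (hN j)).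
    have hf : forall j k, (k >= f j)%coq_nat -> Rdist (it k j) (xs j) < eps.
      move=> j; rewrite /f; by case: constructive_indefinite_description.
    pose K := (\max_(j < n) f j)%N.
    have hK : forall j, xs j - it K j <= eps.
      move=> j; have := hf j K (leP (@leq_bigmax _ f j)).
      rewrite /Rdist => h; have := Rle_abs (- (it K j - xs j)); rewrite Rabs_Ropp; lra.
    have := hkey (it K) eps (hit0 K) (fun j => hle K j) (Rlt_le _ _ heps) hK i.
    rewrite -itS; have := hle (S K) i.
    have : eps * V i <= del.
      have -> : del = eps * (V i + 1) by rewrite /eps; field; lra.
      apply: Rmult_le_compat_l; lra.
    lra.
  have hxsol : is_solution M a b xs.
    apply/hsolG; split => // i; apply: Rle_antisym; [exact: hG2 | exact: hG1].
  exists xs; split => // y hy.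
  have [hy0 hyG] := proj1 (hsolG y) hy.
  have hity : forall k, vle (it k) y.
    elim=> [|k IH]; first by rewrite it0.
    rewrite itS => i; rewrite -(hyG i); exact: G_mono.
  move=> i; apply: (@cv_le _ _ _ (hcv i)) => k; exact: hity.
split; first split.
- exact: Hsol.
- move=> h; have [x [hx _]] := HA1 h; by exists x.
- move=> h; exact: HA1 (Hsol h).
Qed.
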